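(* Let $p$ be a prime, $q$ a power of $p$, and $F$ a field of characteristic $p$ containing $\mathbb{F}_q$. Let $L\in F[x]$ be a monic $q$-polynomial of $q$-degree $n\ge1$ whose coefficient of $x$ is nonzero, let $E$ be its splitting field over $F$, and let $G=\mathrm{Gal}(E/F)$, regarded as a subgroup of $GL(n,q)$ via its linear action on the $\mathbb{F}_q$-space $V$ of roots of $L$. Let $\alpha_1,\dots,\alpha_n$ be an $\mathbb{F}_q$-basis of $V$ and $\delta=\det\big(\alpha_i^{q^{j-1}}\big)_{1\le i,j\le n}$. Then $G\le SL(n,q)$ if and only if $\delta\in F$.
   Context: A $q$-polynomial over $F$ is a polynomial $\sum_{i=0}^n a_i x^{q^i}\in F[x]$; with $a_n\ne0$ its $q$-degree is $n$. When the coefficient of $x$ is nonzero the roots of $L$ in $E$ are distinct and form an $n$-dimensional $\mathbb{F}_q$-vector space $V$ on which $G$ acts $\mathbb{F}_q$-linearly. *)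

(* Defs.v *)
From HB Require Import structures.
From mathcomp Require Import all_boot all_order all_algebra all_fingroup all_field.
Set Implicit Arguments. Unset Strict Implicit. Unset Printing Implicit Defensive.
Import GRing.Theory.
Local Open Scope ring_scope.

Definition qlin_poly (F : fieldType) (q n : nat) (a : 'I_n.+1 -> F) : {poly F} :=
  \sum_(i < n.+1) a i *: 'X^(q ^ i)%N.

(* al_1..al_n is an F_q-basis of the F_q-space V of roots of P in E, where
   F_q = {c in E | c^q = c}. *)
Definition Fq_basis_of_roots (E : fieldType) (q n : nat) (P : {poly E})
    (al : 'I_n -> E) : Prop :=
  [/\ (forall i, root P (al i)),
      (forall c : 'I_n -> E, (forall i, c i ^+ q = c i) ->
          \sum_(i < n) c i * al i = 0 -> forall i, c i = 0) &
      (forall x, root P x -> exists c : 'I_n -> E,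
          (forall i, c i ^+ q = c i) /\ x = \sum_(i < n) c i * al i)].

Definition gal_matrix (F : fieldType) (E : splittingFieldType F) (q n : nat)
    (al : 'I_n -> E) (s : gal_of {:E}) (M : 'M[E]_n) : Prop :=
  (forall i j, M i j ^+ q = M i j) /\
  (forall i, s (al i) = \sum_(j < n) M i j * al j).

Definition gal_in_SL (F : fieldType) (E : splittingFieldType F) (q n : nat)
    (al : 'I_n -> E) : Prop :=
  forall s, s \in 'Gal({:E} / 1%AS)%g ->
    forall M : 'M[E]_n, gal_matrix q al s M -> \det M = 1.

(* Main.v *)
From Pilot Require Import Defs.
From HB Require Import structures.
From mathcomp Require Import all_boot all_order all_algebra all_fingroup all_field.
Import GRing.Theory.
Local Open Scope ring_scope.

Lemma frob_sum (R : comNzRingType) (m : nat) (hm : [pchar R].-nat m)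
   (I : Type) (r : seq I) (P : pred I) (f : I -> R) :
  (\sum_(i <- r | P i) f i) ^+ m = \sum_(i <- r | P i) (f i ^+ m).
Proof.
have m0 : (0 < m)%N by move: hm; case: m.
apply: (big_morph (fun x => x ^+ m)) => [x y|]; first exact: exprDn_pchar.
by rewrite expr0n; case: (m) m0.
Qed.

Lemma fixpow (R : pzRingType) (q j : nat) (c : R) : c ^+ q = c -> c ^+ (q ^ j) = c.
Proof.
move=> h; elim: j => [|j IH]; first by rewrite expn0 expr1.
by rewrite expnS exprM h IH.
Qed.


Theorem corollary2p3 (p k n : nat) (F : fieldType) (E : splittingFieldType F)
    (a : 'I_n.+1 -> F) (al : 'I_n -> E) :
  prime p -> p \in [pchar F] -> (0 < k)%N ->
  (* F contains F_q, q = p^k: x^q - x splits over F *)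
  (exists r : seq F, 'X^(expn p k) - 'X = \prod_(x <- r) ('X - x%:P)) ->
  (0 < n)%N -> a ord_max = 1 -> a ord0 != 0 ->
  (* E is the splitting field of L over F *)
  splittingFieldFor 1%VS (map_poly (in_alg E) (qlin_poly (p ^ k)%N a)) fullv ->
  Fq_basis_of_roots (p ^ k)%N (map_poly (in_alg E) (qlin_poly (p ^ k)%N a)) al ->
  gal_in_SL (p ^ k)%N%N al <->
  \det (\matrix_(i < n, j < n) (al i ^+ ((p ^ k) ^ j)%N)) \in 1%VS.
Proof.
move=> pr_p chF k0 _ n0 amax a0 hsplit [Hroot Hind Hspan].
set q := (p ^ k)%N in hsplit Hroot Hind Hspan *.
set P := map_poly _ _ in hsplit Hroot Hind Hspan.
set A := \matrix_(i < n, j < n) _.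
have chE : p \in [pchar E] by rewrite (pchar_lalg E).
have hq : [pchar E].-nat q.
  rewrite /q pnatX (pnatE _ pr_p) chE; done.
have q1 : (1 < q)%N by rewrite /q -(expn0 p) ltn_exp2l ?prime_gt1.
have galA : forall (s : gal_of {:E}) (M : 'M[E]_n), @Pilot.Defs.gal_matrix F E q n al s M -> s (\det A) = \det M * \det A.
  move=> s M [HM1 HM2]; rewrite -det_map_mx -det_mulmx; congr (\det _).
  have sX : forall x m, s (x ^+ m) = (s x) ^+ m by move=> x m; rewrite rmorphXn.
  apply/matrixP => i j; rewrite !mxE; change (s (al i ^+ (q^j)) = \sum_l M i l * A l j); rewrite sX HM2 frob_sum //.
  apply: eq_bigr => l _; rewrite mxE exprMn fixpow //.
  by rewrite pnatX hq.
have [rs HPrs _] := hsplit.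
have sizeL : size (qlin_poly q a) = (q ^ n).+1.
  rewrite /qlin_poly big_ord_recr /= amax scale1r addrC size_addl size_polyXn //.
  apply: (leq_ltn_trans (size_sum _ _ _)); rewrite ltnS; apply/bigmax_leqP => l _.
  apply: (leq_trans (size_scale_leq _ _)); rewrite size_polyXn ltn_exp2l //.
have sizeP : size P = (q ^ n).+1 by rewrite size_map_poly.
have derL : (qlin_poly q a)^`() = (a ord0)%:P.
  rewrite /qlin_poly raddf_sum big_ord_recl /= big1 ?addr0 => [|i _].
    by rewrite derivZ expn0 derivXn /= expr0 mulr1n alg_polyC.
  rewrite derivZ derivXn -mulr_natl -polyC_natr /q -expnM natrX (pcharf0 chF) expr0n.
  by rewrite muln_eq0 (negPf (lt0n_neq0 k0)) /= polyC0 mul0r scaler0.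
have sepP : separable_poly P.
  rewrite unlock deriv_map derL map_polyC /= -alg_polyC coprimepZr ?coprimep1 //.
  by rewrite scaler_eq0 oner_eq0 orbF.
have urs : uniq rs by rewrite -separable_prod_XsubC -(eqp_separable HPrs).
have srs : size rs = (q ^ n)%N.
  by have := eqp_size HPrs; rewrite size_prod_XsubC sizeP => -[].
have rootrs : forall r, r \in rs -> root P r.
  by move=> r hr; rewrite (eqp_root HPrs) root_prod_XsubC.
have d0 : \det A != 0.
  apply/negP => /eqP hdet.
  have /det0P [v v0 hv] : \det A^T == 0 by rewrite det_tr hdet.
  have [j0 hj0] : exists j0, v 0 j0 != 0.
    case: (pickP (fun j => v 0 j != 0)) => [j0 hj0|hall]; first by exists j0.
    by case/negP: v0; apply/eqP/matrixP => i j; rewrite ord1 mxE; move/negbFE/eqP: (hall j).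
  pose Q := \sum_(j < n) v 0 j *: 'X^(q ^ j).
  have Q0 : Q != 0.
    apply/eqP => hQ; have := congr1 (fun r : {poly E} => r`_(q ^ j0)) hQ; rewrite coef0 coef_sum (bigD1 j0) //=.
    rewrite coefZ coefXn eqxx mulr1 big1 ?addr0; first by move/eqP; rewrite (negPf hj0).
    move=> j hj; rewrite coefZ coefXn eqn_exp2l //.
    by case: eqP => [/val_inj hjj|]; [by rewrite hjj eqxx in hj | by rewrite mulr0].
  have sQ : (size Q <= q ^ n)%N.
    apply: (leq_trans (size_sum _ _ _)); apply/bigmax_leqP => j _.
    by apply: (leq_trans (size_scale_leq _ _)); rewrite size_polyXn ltn_exp2l.
  have rQ : all (root Q) rs.
    apply/allP => r /rootrs /Hspan [c [hc ->]].
    rewrite /root /Q horner_sum; apply/eqP.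
    transitivity (\sum_(j < n) v 0 j * \sum_(i < n) c i * al i ^+ (q ^ j)).
      apply: eq_bigr => j _; rewrite hornerZ hornerXn frob_sum; last by rewrite pnatX hq.
      by congr (_ * _); apply: eq_bigr => i _; rewrite exprMn fixpow.
    under eq_bigr do rewrite mulr_sumr.
    rewrite exchange_big /=; apply: big1 => i _.
    have hvi : \sum_(j < n) v 0 j * al i ^+ (q ^ j) = 0.
      have := congr1 (fun m : 'rV[E]_n => m 0 i) hv; rewrite !mxE => h.
      by apply: etrans h; apply: eq_bigr => j _; rewrite !mxE.
    transitivity (c i * \sum_(j < n) v 0 j * al i ^+ (q ^ j)); last by rewrite hvi mulr0.
    by rewrite mulr_sumr; apply: eq_bigr => j _; rewrite mulrCA.
  have := max_poly_roots Q0 rQ urs; rewrite srs => h.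
  by move: (leq_trans h sQ); rewrite ltnn.
have PO : P \is a polyOver 1%VS by apply/polyOver1P; exists (qlin_poly q a).
have sroot : forall (t : gal_of {:E}) x, t \in 'Gal({:E} / 1%VS)%g -> root P x -> root P (t x).
  by move=> t x hs /(rmorph_root t); rewrite (fixedPoly_gal (sub1v _) hs PO).
split.
  move=> HSL.
  have gal : galois 1%AS {:E} by apply/splitting_galoisField; exists P; split => //.
  have /galois_fixedField fixE := gal.
  rewrite -fixE; apply/fixedFieldP; first exact: memvf.
  move=> t ht.
  pose Pc i (ci : 'I_n -> E) := (forall j, ci j ^+ q = ci j) /\ t (al i) = \sum_j ci j * al j.
  have [c hc] : exists c : 'I_n -> 'I_n -> E, forall i, Pc i (c i).
    by apply: (@fin_all_exists _ (fun _ => 'I_n -> E) Pc) => i; exact: Hspan _ (sroot _ _ ht (Hroot i)).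
  pose M := \matrix_(i, j) c i j.
  have gM : Pilot.Defs.gal_matrix q al t M.
    split => [i j|i]; rewrite ?mxE; first exact: (hc i).1 j.
    by rewrite (hc i).2; apply: eq_bigr => j _; rewrite mxE.
  by rewrite (galA t M gM) (HSL t ht M gM) mul1r.
move=> hd t ht M gM; have := galA t M gM.
rewrite (fixed_gal (sub1v _) ht hd) => h.
by apply: (mulIf d0); rewrite mul1r -h.
Qed.
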